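(* Let $G$ be a cubic near-bipartite brick with at least six vertices. Then $G$ has a $K_4$-decomposition if and only if $G$ is a tri-ladder.
   Context: Graphs may have multiple edges but no loops. An edge is admissible if it lies in some perfect matching; a connected graph with at least two vertices is matching covered if every edge is admissible. A brick is a 3-connected nonbipartite graph $G$ such that $G-x-y$ has a perfect matching for all distinct $x,y$. A nonbipartite matching covered graph $G$ is near-bipartite if it has a pair of edges $\{e_1,e_2\}$ such that $G-\{e_1,e_2\}$ is bipartite matching covered. For $X\subseteq V(G)$, $\overline{X}=V(G)\setminus X$ and $\partial(X)$ is the set of edges with exactly one end in $X$; the cut is nontrivial if $|X|,|\overline X|\ge 2$. $G/X$ is obtained by contracting $X$ to a single vertex $x$ (removing edges inside $X$), $G/\overline X$ similarly with vertex $\overline x$; these are the $\partial(X)$-contractions, and $G$ is a splicing of $G/X$ and $G/\overline{X}$ at $x$ and $\overline{x}$. A 3-cut-decomposition of a 3-connected cubic graph is obtained by repeatedly choosing a graph in the current list that has a nontrivial 3-cut $C$ and replacing it by its two $C$-contractions, until no graph in the list has a nontrivial 3-cut; it is a $K_4$-decomposition if the final list consists only of copies of $K_4$. A graph has a $K_4$-decomposition if some 3-cut-decomposition of it is a $K_4$-decomposition. $\overline{C_6}$ denotes the complement of the 6-cycle (the triangular prism). A graph $G$ is a tri-ladder if there is a sequence $G_0,\dots,G_r$ ($r\ge0$) with $G_0=\overline{C_6}$, $G_r=G$, and for $1\le i\le r$, $G_i$ is a splicing of $G_{i-1}$ and $K_4$ at a vertex of $G_{i-1}$ lying in a triangle of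 $G_{i-1}$ and a vertex of $K_4$. *)

(* Defs.v *)
From mathcomp Require Import ssreflect ssrfun ssrbool eqtype ssrnat seq choice fintype finset fingraph.
Set Implicit Arguments.
Unset Strict Implicit.
Unset Printing Implicit Defensive.

Record mgraph := MGraph {
  vert : finType;
  edge : finType;
  src : edge -> vert;
  tgt : edge -> vert }.

Section Basics.
Variable G : mgraph.
Implicit Types (u v : vert G) (e : edge G) (F : {set edge G}) (S X : {set vert G}).

Definition loopless := forall e, src e != tgt e.

Definition incident e v := (src e == v) || (tgt e == v).

Definition degree v := #|[set e | incident e v]|.

Definition cubic := forall v, degree v = 3.

Definition adj_in F S : rel (vert G) := fun u v =>
  [&& [exists e in F, ((src e == u) && (tgt e == v)) || ((src e == v) && (tgt e == u))],
      u \notin S & v \notin S].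

Definition connected_in F S :=
  forall u v, u \notin S -> v \notin S -> connect (adj_in F S) u v.

Definition connected := connected_in setT set0.

Definition three_connected :=
  3 < #|vert G| /\ forall S, #|S| <= 2 -> connected_in setT S.

Definition perfect_matching_in F S (M : {set edge G}) :=
  [/\ M \subset F,
      forall e, e \in M -> (src e \notin S) && (tgt e \notin S)
    & (forall v, v \notin S -> #|[set e in M | incident e v]| = 1)].

Definition perfect_matching M := perfect_matching_in setT set0 M.

Definition bipartite_in F :=
  exists c : vert G -> bool, forall e, e \in F -> c (src e) != c (tgt e).

Definition bipartite := bipartite_in setT.

Definition matching_covered_in F :=
  [/\ connected_in F set0, 2 <= #|vert G|
    & (forall e, e \in F -> exists M, perfect_matching_in F set0 M /\ e \in M)].

Definition matching_covered := matching_covered_in setT.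

Definition brick :=
  [/\ three_connected, ~ bipartite
    & (forall x y : vert G, x != y ->
        exists M, perfect_matching_in setT [set x; y] M)].

Definition near_bipartite :=
  [/\ ~ bipartite, matching_covered
    & (exists e1 e2 : edge G, e1 != e2 /\
        bipartite_in (~: [set e1; e2]) /\ matching_covered_in (~: [set e1; e2]))].

Definition cut X := [set e | (src e \in X) != (tgt e \in X)].

Definition nontrivial_3cut X :=
  [/\ 2 <= #|X|, 2 <= #|~: X| & #|cut X| = 3].

Definition has_nontrivial_3cut := exists X, nontrivial_3cut X.

Definition adj u v := adj_in setT set0 u v.
Definition in_triangle v :=
  exists u w, [&& u != v, w != v, u != w, adj v u, adj v w & adj u w].

End Basics.

(* Contraction G/X: X is shrunk to the single new vertex [None]; the edges
   with both ends in X are removed. *)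
Section Contract.
Variables (G : mgraph) (X : {set vert G}).
Definition cvert := option {v : vert G | v \notin X}.
Definition cedge := {e : edge G | ~~ ((src e \in X) && (tgt e \in X))}.
Definition cend (v : vert G) : cvert := insub v.
Definition contract : mgraph :=
  @MGraph (option {v : vert G | v \notin X})
    {e : edge G | ~~ ((src e \in X) && (tgt e \in X))}
    (fun e => cend (src (val e))) (fun e => cend (tgt (val e))).
Definition contr_vertex : vert contract := None.
End Contract.

Definition same_ends (T : eqType) (a b c d : T) :=
  ((a == c) && (b == d)) || ((a == d) && (b == c)).

Definition iso (G H : mgraph) :=
  exists (f : vert G -> vert H) (g : edge G -> edge H),
    [/\ bijective f, bijective g &
        forall e, same_ends (f (src e)) (f (tgt e)) (src (g e)) (tgt (g e))].

Definition iso_at (G H : mgraph) (x : vert G) (y : vert H) :=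
  exists (f : vert G -> vert H) (g : edge G -> edge H),
    [/\ bijective f, bijective g, f x = y &
        forall e, same_ends (f (src e)) (f (tgt e)) (src (g e)) (tgt (g e))].

(* G is (isomorphic to) a splicing of H1 at x and H2 at y:
   G has a cut partial(X) with G/X = H1 (contracted vertex = x) and
   G/~X = H2 (contracted vertex = y). *)
Definition splicing (G H1 : mgraph) (x : vert H1) (H2 : mgraph) (y : vert H2) :=
  exists X : {set vert G},
    iso_at (contr_vertex X) x /\ iso_at (contr_vertex (~: X)) y.

Definition sg_edge n (r : rel 'I_n) :=
  {p : 'I_n * 'I_n | (p.1 < p.2) && r p.1 p.2}.
Definition sgraph n (r : rel 'I_n) : mgraph :=
  @MGraph 'I_n {p : 'I_n * 'I_n | (p.1 < p.2) && r p.1 p.2}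
    (fun p => (val p).1) (fun p => (val p).2).

Definition K4 : mgraph := @sgraph 4 (fun _ _ => true).

(* complement of the 6-cycle 0-1-2-3-4-5-0 (the triangular prism) *)
Definition C6bar : mgraph :=
  @sgraph 6 (fun i j => (j - i != 1) && (j - i != 5)).

(* G has a K4-decomposition: some 3-cut-decomposition ends with copies of
   K4 only.  Since the decomposition steps act independently on the members
   of the list, this is a finite decomposition tree whose leaves have no
   nontrivial 3-cut and are isomorphic to K4. *)
Inductive has_K4_decomposition : mgraph -> Prop :=
| K4dec_leaf (G : mgraph) :
    ~ has_nontrivial_3cut G -> iso G K4 -> has_K4_decomposition G
| K4dec_split (G : mgraph) (X : {set vert G}) :
    nontrivial_3cut X ->
    has_K4_decomposition (contract X) ->
    has_K4_decomposition (contract (~: X)) ->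
    has_K4_decomposition G.

Inductive tri_ladder : mgraph -> Prop :=
| TL_base (G : mgraph) : iso G C6bar -> tri_ladder G
| TL_step (G H : mgraph) (v : vert H) (k : vert K4) :
    tri_ladder H -> in_triangle v -> splicing G v k -> tri_ladder G.

(* Main.v *)
Require Import Defs.
From mathcomp Require Import ssreflect ssrfun ssrbool eqtype ssrnat seq div choice fintype finset fingraph.
Set Implicit Arguments.
Unset Strict Implicit.
Unset Printing Implicit Defensive.

Section SE.
Variable T : eqType.
Implicit Types a b c d x y : T.
Lemma same_endsP a b c d :
  reflect ((a = c /\ b = d) \/ (a = d /\ b = c)) (same_ends a b c d).
Proof.
rewrite /same_ends; apply: (iffP orP).
  by case=> /andP[/eqP-> /eqP->]; [left|right].
by case=> [[->->]|[->->]]; rewrite !eqxx; [left|right].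
Qed.
Lemma same_ends_refl a b : same_ends a b a b.
Proof. by apply/same_endsP; left. Qed.
Lemma same_endsC a b c d : same_ends a b c d = same_ends c d a b.
Proof.
by apply/same_endsP/same_endsP=> [][[->->]|[->->]]; [left|right|left|right].
Qed.
Lemma same_ends_sw a b c d : same_ends a b c d = same_ends b a c d.
Proof.
by apply/same_endsP/same_endsP=> [][[->->]|[->->]]; [right|left|right|left].
Qed.
Lemma same_ends_trans a b c d x y :
  same_ends a b c d -> same_ends c d x y -> same_ends a b x y.
Proof.
by move=> /same_endsP[[->->]|[->->]] // /same_endsP[[->->]|[->->]];
  apply/same_endsP; auto.
Qed.
End SE.

Lemma same_ends_map (T U : eqType) (f : T -> U) a b c d :
  same_ends a b c d -> same_ends (f a) (f b) (f c) (f d).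
Proof. by move=> /same_endsP[[->->]|[->->]]; apply/same_endsP; auto. Qed.

Lemma same_ends_inj (T U : eqType) (f : T -> U) a b c d : injective f ->
  same_ends (f a) (f b) (f c) (f d) = same_ends a b c d.
Proof. by move=> fi; rewrite /same_ends !(inj_eq fi). Qed.

Lemma inj_surj_bij (A : choiceType) (B : eqType) (f : A -> B) :
  injective f -> (forall b, exists a, f a = b) -> bijective f.
Proof.
move=> inj sur.
have sur' b : exists a, f a == b by case: (sur b) => a <-; exists a.
exists (fun b => xchoose (sur' b)) => [a|b]; last exact/eqP/(xchooseP (sur' b)).
by apply: inj; apply/eqP/(xchooseP (sur' (f a))).
Qed.

Lemma iso_refl G : iso G G.
Proof. by exists id, id; split; try exists id; move=> //= e; exact: same_ends_refl. Qed.

Lemma iso_sym G H : iso G H -> iso H G.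
Proof.
case=> f [g [[f' ff' f'f] [g' gg' g'g] E]].
exists f', g'; split; try by [exists f|exists g].
move=> h; have := E (g' h); rewrite g'g => /(same_ends_map f').
by rewrite !ff' same_endsC.
Qed.

Lemma iso_trans G H K : iso G H -> iso H K -> iso G K.
Proof.
case=> f [g [bf bg E]] [f2 [g2 [bf2 bg2 E2]]].
exists (f2 \o f), (g2 \o g); split; try exact: bij_comp.
move=> e /=; apply: same_ends_trans (E2 (g e)); exact: same_ends_map.
Qed.

Lemma iso_atW G H x y : @iso_at G H x y -> iso G H.
Proof. by case=> f [g [bf bg _ E]]; exists f, g. Qed.

Lemma loopless_iso G H : iso G H -> loopless H -> loopless G.
Proof.
case=> f [g [bf bg E]] lH e; apply/negP=> /eqP Ee.
have := E e; rewrite Ee => /same_endsP[[E1 E2]|[E1 E2]]; move: (lH (g e)); by rewrite -E1 -E2 eqxx.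
Qed.

Lemma iso_card G H : iso G H -> #|vert G| = #|vert H|.
Proof. by case=> f [g [bf _ _]]; exact: bij_eq_card bf. Qed.

Definition quot (G H : mgraph) (phi : vert G -> vert H) :=
  (forall h, exists v, phi v = h) /\
  exists psi : edge G -> option (edge H),
   [/\ forall e, (psi e == None) = (phi (src e) == phi (tgt e)),
       forall e h, psi e = Some h -> same_ends (phi (src e)) (phi (tgt e)) (src h) (tgt h),
       forall e1 e2 h, psi e1 = Some h -> psi e2 = Some h -> e1 = e2
     & forall h, exists e, psi e = Some h].

Lemma quot_unique G H1 H2 (p1 : vert G -> vert H1) (p2 : vert G -> vert H2) :
  quot p1 -> quot p2 -> (forall u v, (p1 u == p1 v) = (p2 u == p2 v)) ->
  exists f g, [/\ bijective f, bijective g, forall v, f (p1 v) = p2 v &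
    forall e, same_ends (f (src e)) (f (tgt e)) (src (g e)) (tgt (g e))].
Proof.
case=> s1 [q1 [N1 S1 I1 U1]] [s2 [q2 [N2 S2 I2 U2]]] K.
have s1' h : exists v, p1 v == h by case: (s1 h) => v <-; exists v.
pose f h := p2 (xchoose (s1' h)).
have fE v : f (p1 v) = p2 v.
  apply/eqP; rewrite /f -K; exact: (xchooseP (s1' (p1 v))).
have ex h1 : exists h2, [exists e, (q1 e == Some h1) && (q2 e == Some h2)].
  case: (U1 h1) => e E1.
  case E2: (q2 e) => [h2|]; first by exists h2; apply/existsP; exists e; rewrite E1 E2 !eqxx.
  move: (N1 e) (N2 e); rewrite E1 E2 K /= => <-; by rewrite eqxx.
pose g h1 := xchoose (ex h1).
have gP h1 : exists e, q1 e = Some h1 /\ q2 e = Some (g h1).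
  by case/existsP: (xchooseP (ex h1)) => e /andP[/eqP ? /eqP ?]; exists e.
exists f, g; split => //.
- apply: inj_surj_bij => [h h'|h2].
    case: (s1 h) => v <-; case: (s1 h') => v' <-; rewrite !fE => /eqP.
    by rewrite -K => /eqP.
  by case: (s2 h2) => v <-; exists (p1 v).
- apply: inj_surj_bij => [h h'|h2].
    case: (gP h) => e [E1 E2]; case: (gP h') => e' [E1' E2'] Eg.
    rewrite Eg in E2; have ee := I2 _ _ _ E2 E2'; subst e'.
    by move: E1; rewrite E1' => -[].
  case: (U2 h2) => e E2.
  case E1: (q1 e) => [h1|]; last first.
    by move: (N1 e) (N2 e); rewrite E1 E2 K /= => <-; rewrite eqxx.
  exists h1; case: (gP h1) => e' [E1' E2'].
  by rewrite -(I1 _ _ _ E1 E1') E2 in E2'; case: E2'.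
- move=> h1; case: (gP h1) => e [E1 E2].
  have := same_ends_map f (S1 _ _ E1); rewrite !fE same_endsC => H.
  exact: same_ends_trans H (S2 _ _ E2).
Qed.

Lemma quot_comp G H K (p : vert G -> vert H) (c : vert H -> vert K) :
  quot p -> quot c -> quot (c \o p).
Proof.
case=> s1 [q1 [N1 S1 I1 U1]] [s2 [q2 [N2 S2 I2 U2]]]; split.
  by move=> k; case: (s2 k) => h <-; case: (s1 h) => v <-; exists v.
exists (fun e => obind q2 (q1 e)); split.
- move=> e /=; case E1: (q1 e) => [h|] /=.
    move: (S1 _ _ E1) => /same_endsP[[->->]|[->->]]; rewrite N2 //; exact: eq_sym.
  by move: (N1 e); rewrite E1 eqxx => /esym /eqP ->; rewrite eqxx.
- move=> e k /=; case E1: (q1 e) => [h|] //= E2.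
  exact: same_ends_trans (same_ends_map c (S1 _ _ E1)) (S2 _ _ E2).
- move=> e1 e2 k /=; case E1: (q1 e1) => [h1|] //=; case E2: (q1 e2) => [h2|] //= F1 F2.
  have hh := I2 _ _ _ F1 F2; subst h2; exact: I1 E1 E2.
- by move=> k; case: (U2 k) => h E2; case: (U1 h) => e E1; exists e; rewrite E1.
Qed.

Lemma quot_iso G H : loopless G -> iso G H ->
  exists f : vert G -> vert H, quot f /\ bijective f.
Proof.
move=> lG [f [g [bf bg E]]]; exists f; split => //.
split; first by case: bf => f' ff' f'f h; exists (f' h); rewrite f'f.
exists (fun e => Some (g e)); split.
- by move=> e /=; rewrite (inj_eq (bij_inj bf)); apply/esym/negbTE/lG.
- by move=> e h [<-].
- by move=> e1 e2 h [<-] [] /(bij_inj bg).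
- by case: bg => g' gg' g'g h; exists (g' h); rewrite g'g.
Qed.

Lemma quot_iso_at G H1 H2 (p1 : vert G -> vert H1) (p2 : vert G -> vert H2) :
  quot p1 -> quot p2 -> (forall u v, (p1 u == p1 v) = (p2 u == p2 v)) ->
  forall x, iso_at (p1 x) (p2 x).
Proof.
move=> q1 q2 K x; case: (quot_unique q1 q2 K) => f [g [bf bg fE E]].
by exists f, g; split.
Qed.

Lemma quot_isoW G H1 H2 (p1 : vert G -> vert H1) (p2 : vert G -> vert H2) :
  quot p1 -> quot p2 -> (forall u v, (p1 u == p1 v) = (p2 u == p2 v)) -> iso H1 H2.
Proof.
move=> q1 q2 K; case: (quot_unique q1 q2 K) => f [g [bf bg fE E]].
by exists f, g; split.
Qed.

Section Contr.
Variables (G : mgraph) (X : {set vert G}).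

Lemma cend_None v : (cend X v == None) = (v \in X).
Proof. by rewrite /cend; case: insubP => [u /negbTE -> //|/negbNE ->]. Qed.

Lemma cendK (w : {v : vert G | v \notin X}) : cend X (val w) = Some w.
Proof. exact: valK. Qed.

Lemma cend_eq u v : (cend X u == cend X v) = (u == v) || ((u \in X) && (v \in X)).
Proof.
rewrite /cend; case: insubP => [a Pa Ea|Nu]; case: insubP => [b Pb Eb|Nv] /=.
- by rewrite (inj_eq (@Some_inj _)) (negbTE Pa) -Ea -Eb val_eqE orbF.
- rewrite (negbTE Pa) /= orbF; apply/esym/negbTE; apply: contraNneq Nv => <-.
  exact: Pa.
- rewrite (negbTE Pb) andbF orbF; apply/esym/negbTE; apply: contraNneq Nu => ->.
  exact: Pb.
- by rewrite eqxx (negbNE Nu) (negbNE Nv) orbT.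
Qed.

Lemma cend_out u v : u \notin X -> (cend X v == cend X u) = (v == u).
Proof. by move=> /negbTE Hu; rewrite cend_eq Hu andbF orbF. Qed.

Lemma cend_Some (w : vert (contract X)) : w != None -> exists v, v \notin X /\ cend X v = w.
Proof. by case: w => // a _; exists (val a); rewrite cendK (valP a). Qed.

Lemma contract_src (e : edge (contract X)) : src e = cend X (src (val e)).
Proof. by []. Qed.
Lemma contract_tgt (e : edge (contract X)) : tgt e = cend X (tgt (val e)).
Proof. by []. Qed.

Lemma contract_edgeP (e : edge (contract X)) : ~~ ((src (val e) \in X) && (tgt (val e) \in X)).
Proof. exact: (valP e). Qed.

Lemma loopless_contract : loopless G -> loopless (contract X).
Proof.
move=> lG e; rewrite contract_src contract_tgt cend_eq negb_or lG /=.
exact: contract_edgeP.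
Qed.

Lemma card_contract : #|vert (contract X)| = #|~: X|.+1.
Proof.
rewrite /= card_option card_sig; congr _.+1; apply: eq_card => v.
by rewrite !inE.
Qed.

Lemma quot_contract : loopless G -> (exists x, x \in X) -> @quot G (contract X) (cend X).
Proof.
move=> lG [x xX]; split.
  case=> [w|]; first by exists (val w); rewrite cendK.
  by exists x; apply/eqP; rewrite cend_None.
exists (fun e => insub e : option (edge (contract X))); split.
- move=> e; rewrite cend_eq (negbTE (lG e)) /=.
  case: insubP => [a Pa Ea|/negbNE -> //]; by rewrite (negbTE Pa).
- move=> e h; case: insubP => [a Pa Ea [<-]|//].
  by rewrite contract_src contract_tgt Ea same_ends_refl.
- move=> e1 e2 h; case: insubP => [a _ Ea [<-]|//]; case: insubP => [b _ Eb [Eab]|//].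
  by rewrite -Ea -Eb Eab.
- by move=> h; exists (val h); rewrite valK.
Qed.

End Contr.

Lemma cutC G (X : {set vert G}) : cut (~: X) = cut X.
Proof. by apply/setP=> e; rewrite !inE; case: (_ \in X); case: (_ \in X). Qed.

Lemma cross_same (T : finType) (Z : {set T}) (a b c d : T) :
  same_ends a b c d -> ((a \in Z) != (b \in Z)) = ((c \in Z) != (d \in Z)).
Proof. by case/same_endsP=> [[->->]|[->->]] //; rewrite eq_sym. Qed.

Lemma cut_quot G H (p : vert G -> vert H) (Z : {set vert H}) : quot p ->
  #|cut Z| = #|cut (p @^-1: Z)|.
Proof.
case=> s [q [N S I U]].
have U' h : exists e, q e == Some h by case: (U h) => e E; exists e; rewrite E.
pose k : edge H -> edge G := fun h => xchoose (U' h).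
have kE h : q (k h) = Some h by apply/eqP/(xchooseP (U' h)).
have ki : injective k by move=> h h' E; have := kE h; rewrite E kE => -[].
rewrite -(card_imset (cut Z) ki); apply: eq_card => e; rewrite [in RHS]inE.
apply/imsetP/idP => [[h]|].
  by rewrite !inE => hZ ->; rewrite (cross_same Z (S _ _ (kE h))).
rewrite !inE => eZ; case E: (q e) => [h|]; last first.
  by move: (N e) eZ; rewrite E eqxx => /esym /eqP ->; rewrite eqxx.
exists h; last by apply: I E (kE h).
by rewrite inE -(cross_same Z (S _ _ E)).
Qed.

Lemma card_preim_bij (A B : finType) (f : A -> B) (S : {set B}) :
  bijective f -> #|f @^-1: S| = #|S|.
Proof.
move=> bf; rewrite -(card_imset (f @^-1: S) (bij_inj bf)); apply: eq_card => y.
case: bf => f' ff' f'f; apply/imsetP/idP => [[x]|yS].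
  by rewrite inE => ? ->.
by exists (f' y); rewrite ?inE f'f.
Qed.

Lemma nontriv_pre G H (p : vert G -> vert H) (Z : {set vert H}) :
  quot p -> bijective p -> nontrivial_3cut Z -> nontrivial_3cut (p @^-1: Z).
Proof.
move=> qp bp [h1 h2 h3]; split.
- by rewrite card_preim_bij.
- by rewrite -preimsetC card_preim_bij.
- by rewrite -(cut_quot _ qp).
Qed.

Lemma has3_iso G H : loopless H -> iso H G -> has_nontrivial_3cut G -> has_nontrivial_3cut H.
Proof.
move=> lH iHG [Z nZ]; case: (quot_iso lH iHG) => f [qf bf].
by exists (f @^-1: Z); apply: nontriv_pre.
Qed.

Lemma ex_in (T : finType) (A : {set T}) : 1 < #|A| -> exists x, x \in A.
Proof. by move=> h; apply/card_gt0P; apply: ltnW. Qed.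

Lemma decomp_iso H : has_K4_decomposition H ->
  forall G, loopless G -> iso G H -> has_K4_decomposition G.
Proof.
elim=> {H} [H nH iH|H X nX dA IHA dB IHB] G lG iGH.
  have lH := loopless_iso (iso_sym iGH) lG.
  apply: K4dec_leaf; last exact: iso_trans iGH iH.
  by move=> hG; apply: nH; exact: has3_iso lH (iso_sym iGH) hG.
have lH := loopless_iso (iso_sym iGH) lG.
case: (quot_iso lG iGH) => f [qf bf].
have fi := bij_inj bf.
have nX' := nontriv_pre qf bf nX.
case: (nX') => c1 c2 _.
case: (nX) => d1 d2 _.
apply: (K4dec_split nX').
  apply: IHA; first exact: loopless_contract.
  apply: (@quot_isoW G (contract (f @^-1: X)) (contract X) (cend (f @^-1: X)) (cend X \o f)).
  - exact: quot_contract lG (ex_in c1).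
  - exact: quot_comp qf (quot_contract lH (ex_in d1)).
  by move=> u v /=; rewrite !cend_eq (inj_eq fi) !inE.
apply: IHB; first exact: loopless_contract.
apply: (@quot_isoW G (contract (~: f @^-1: X)) (contract (~: X)) (cend (~: f @^-1: X)) (cend (~: X) \o f)).
- exact: quot_contract lG (ex_in c2).
- exact: quot_comp qf (quot_contract lH (ex_in d2)).
by move=> u v /=; rewrite !cend_eq (inj_eq fi) !inE.
Qed.

Lemma decomp_card G : has_K4_decomposition G -> 4 <= #|vert G|.
Proof.
case=> [{}G _ iG|{}G X [h1 h2 _] _ _].
  by rewrite (iso_card iG) /= card_ord.
by rewrite -(cardsC X); exact: (leq_add h1 h2).
Qed.

Definition simple G := forall e1 e2 : edge G,
  same_ends (src e1) (tgt e1) (src e2) (tgt e2) -> e1 = e2.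
Definition complete G := forall u v : vert G, u != v ->
  exists e, same_ends (src e) (tgt e) u v.

Lemma adjE G (u v : vert G) : adj u v = [exists e, same_ends (src e) (tgt e) u v].
Proof.
rewrite /adj /adj_in !inE andbT.
apply/existsP/existsP => [[e /andP[_ He]]|[e He]]; exists e => //.
by rewrite inE.
Qed.

Lemma adjP G (u v : vert G) : reflect (exists e, same_ends (src e) (tgt e) u v) (adj u v).
Proof. by rewrite adjE; apply: existsP. Qed.

Lemma adjC G (u v : vert G) : adj u v = adj v u.
Proof.
by apply/adjP/adjP=> [][e He]; exists e; rewrite same_endsC same_ends_sw same_endsC.
Qed.

Lemma adj_loop G (u : vert G) : loopless G -> adj u u = false.
Proof.
move=> lG; apply/negbTE/adjP=> [][e /same_endsP[[E1 E2]|[E1 E2]]];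
  by move: (lG e); rewrite E1 E2 eqxx.
Qed.

Section SG.
Variables (n : nat) (r : rel 'I_n).
Lemma sg_loopless : loopless (sgraph r).
Proof.
move=> [[i j] Hp]; have /andP[H _] := Hp; apply/negP => /eqP /= E.
by rewrite /= E ltnn in H.
Qed.
Lemma sg_simple : simple (sgraph r).
Proof.
move=> [[i j] Hp] [[i' j'] Hp']; have /andP[H _] := Hp; have /andP[H' _] := Hp'.
case/same_endsP => /= [[E1 E2]|[E1 E2]].
  by subst; apply: val_inj.
by subst; move: (ltn_trans H H'); rewrite ltnn.
Qed.
Lemma sg_adj (i j : 'I_n) : adj (G := sgraph r) i j = ((i < j) && r i j) || ((j < i) && r j i).
Proof.
apply/adjP/idP => [[[[a b] Hp]]|].
  have /andP[H R] := Hp.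
  by case/same_endsP=> /= [[<-<-]|[<-<-]] /=; rewrite ?H ?R ?orbT.
case/orP=> /andP[H R].
  by exists (exist _ (i, j) (introT andP (conj H R)) : edge (sgraph r)); apply: same_ends_refl.
exists (exist _ (j, i) (introT andP (conj H R)) : edge (sgraph r)).
by apply/same_endsP; right.
Qed.
End SG.

Lemma K4_complete : complete K4.
Proof.
move=> u v uv; case: (ltngtP u v) => [lt|gt|eq].
- exists (exist _ (u, v) (introT andP (conj lt isT)) : edge K4); exact: same_ends_refl.
- exists (exist _ (v, u) (introT andP (conj gt isT)) : edge K4).
  by apply/same_endsP; right.
- by move: uv; rewrite (_ : u = v) ?eqxx //; apply/val_inj.
Qed.

Lemma iso_K4_props G : iso G K4 ->
  [/\ loopless G, simple G, complete G & #|vert G| = 4].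
Proof.
move=> iG; have lG := loopless_iso iG (@sg_loopless 4 _).
case: (iG) => f [g [bf bg E]]; split => //.
- move=> e1 e2 H; apply: (bij_inj bg); apply: (@sg_simple 4 (fun _ _ => true)).
  have H1 := E e1; have H2 := E e2.
  rewrite same_endsC in H1.
  exact: same_ends_trans H1 (same_ends_trans (same_ends_map f H) H2).
- move=> u v uv; have : f u != f v by rewrite (inj_eq (bij_inj bf)).
  case/K4_complete=> h Hh; case: bg => g' gg' g'g.
  exists (g' h); have := E (g' h); rewrite g'g => H.
  by rewrite -(same_ends_inj _ _ _ _ (bij_inj bf)); exact: same_ends_trans H Hh.
- by rewrite (iso_card iG) /= card_ord.
Qed.

Lemma complete_cut G (X : {set vert G}) : complete G -> #|X| * #|~: X| <= #|cut X|.
Proof.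
move=> cG; rewrite -cardsX.
pose k (p : vert G * vert G) := [pick e | same_ends (src e) (tgt e) p.1 p.2].
have kS p : p \in setX X (~: X) -> exists e, k p = Some e /\ same_ends (src e) (tgt e) p.1 p.2.
  rewrite !inE => /andP[p1 p2]; rewrite /k; case: pickP => [e He|none].
    by exists e.
  have : p.1 != p.2 by apply: contraNneq p2 => <-.
  by case/cG => e He; move: (none e); rewrite He.
rewrite -(card_in_imset (f := k)); last first.
  move=> p1 p2 H1 H2; case: (kS _ H1) => e1 [E1 S1]; case: (kS _ H2) => e2 [E2 S2].
  rewrite E1 E2 => -[ee]; subst e2.
  rewrite same_endsC in S1; have S := same_ends_trans S1 S2.
  move: H1 H2 S; clear E1 E2 S1 S2; case: p1 => a b; case: p2 => c d; rewrite !inE /= => /andP[aX bX] /andP[cX dX].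
  by case/same_endsP=> [[->->]//|[ad _]]; move: dX; rewrite -ad aX.
have sub : k @: setX X (~: X) \subset [set Some e | e in cut X].
  apply/subsetP => o /imsetP[p Hp ->]; case: (kS _ Hp) => e [-> Se].
  apply/imsetP; exists e => //.
  move: Hp; rewrite !inE => /andP[p1 p2]; rewrite (cross_same X Se) p1.
  by move: p2; case: (p.2 \in X).
apply: leq_trans (subset_leq_card sub) _.
by rewrite card_imset //; exact: Some_inj.
Qed.

Lemma complete_no3cut G : complete G -> ~ has_nontrivial_3cut G.
Proof.
move=> cG [X [h1 h2 h3]]; have := complete_cut X cG; rewrite h3.
by move=> /(leq_trans (leq_mul h1 h2)).
Qed.

Lemma decomp_K4 G : iso G K4 -> has_K4_decomposition G.
Proof.
move=> iG; case: (iso_K4_props iG) => _ _ cG _.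
by apply: K4dec_leaf => //; exact: complete_no3cut.
Qed.

Definition oth G (v : vert G) (e : edge G) := if src e == v then tgt e else src e.

Lemma oth_same G (v : vert G) e : incident e v -> same_ends (src e) (tgt e) v (oth v e).
Proof.
rewrite /incident /oth; case: eqP => [->|_] /= H; first exact: same_ends_refl.
by apply/same_endsP; right; split=> //; apply/eqP.
Qed.

Lemma degree_complete G (v : vert G) : loopless G -> simple G -> complete G ->
  degree v = #|vert G|.-1.
Proof.
move=> lG sG cG; rewrite /degree -(cardsC1 v).
rewrite -(card_in_imset (f := oth v)); last first.
  move=> e1 e2; rewrite !inE => H1 H2 E; apply: sG.
  have S1 := oth_same H1; have S2 := oth_same H2; rewrite E in S1.
  rewrite same_endsC in S2; exact: same_ends_trans S1 S2.
apply: eq_card => w; rewrite !inE; apply/imsetP/idP => [[e]|wv].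
  rewrite inE => He ->; move: (oth_same He) (lG e).
  by case/same_endsP=> [[->->]|[->->]]; rewrite // eq_sym.
rewrite eq_sym in wv; case: (cG _ _ wv) => e Se.
have Ie : incident e v by rewrite /incident; case/same_endsP: Se => [[->_]|[_->]]; rewrite eqxx ?orbT.
exists e; first by rewrite inE.
move: (oth_same Ie); rewrite same_endsC => S; have := same_ends_trans S Se.
case/same_endsP => [[_ ->]//|[E _]]; by move: wv; rewrite E eqxx.
Qed.

Lemma deg_cut G (v : vert G) : loopless G -> degree v = #|cut [set v]|.
Proof.
move=> lG; apply: eq_card => e; rewrite !inE /incident.
case Hs: (src e == v); case Ht: (tgt e == v) => //=.
by move: (lG e); rewrite (eqP Hs) (eqP Ht) eqxx.
Qed.

Lemma iso_simple G H (f : vert G -> vert H) : simple G -> simple H -> bijective f ->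
  (forall u v, adj (f u) (f v) = adj u v) -> iso G H.
Proof.
move=> sG sH bf fA.
have ex e : exists h : edge H, same_ends (src h) (tgt h) (f (src e)) (f (tgt e)).
  by apply/adjP; rewrite fA; apply/adjP; exists e; apply: same_ends_refl.
pose g e := xchoose (ex e).
have gE e : same_ends (src (g e)) (tgt (g e)) (f (src e)) (f (tgt e)) := xchooseP (ex e).
exists f, g; split => //; last by move=> e; rewrite same_endsC.
apply: inj_surj_bij => [e1 e2 E|h].
  apply: sG; rewrite -(same_ends_inj _ _ _ _ (bij_inj bf)).
  have := gE e1; rewrite E same_endsC => S; exact: same_ends_trans S (gE e2).
case: bf => f' ff' f'f.
have : adj (f' (src h)) (f' (tgt h)) by rewrite -fA !f'f; apply/adjP; exists h; apply: same_ends_refl.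
case/adjP=> e Se; exists e; apply: sH.
apply: same_ends_trans (gE e) _; have := same_ends_map f Se; by rewrite !f'f.
Qed.

Lemma adj_complete G (u v : vert G) : loopless G -> complete G -> adj u v = (u != v).
Proof.
move=> lG cG; apply/idP/idP => [|/cG/adjP//].
by apply: contraTneq => ->; rewrite adj_loop.
Qed.

Lemma K4_of G : loopless G -> simple G -> complete G -> #|vert G| = 4 -> iso G K4.
Proof.
move=> lG sG cG E.
pose f (v : vert G) : 'I_4 := cast_ord E (enum_rank v).
have fi : injective f by move=> u v /cast_ord_inj /enum_rank_inj.
apply: (@iso_simple G K4 f) => //.
- exact: sg_simple.
- exists (fun i : 'I_4 => enum_val (cast_ord (esym E) i)) => [v|i].
    by rewrite /f cast_ordK enum_rankK.
  by rewrite /f enum_valK cast_ordKV.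
- move=> u v; rewrite (adj_complete _ _ lG cG).
  rewrite (@adj_complete K4) ?(inj_eq fi) //; [exact: sg_loopless | exact: K4_complete].
Qed.

Lemma cend_same G (Z : {set vert G}) a b u v : u \notin Z -> v \notin Z ->
  same_ends (cend Z a) (cend Z b) (cend Z u) (cend Z v) = same_ends a b u v.
Proof. by move=> uZ vZ; rewrite /same_ends !cend_out. Qed.

Section TK4.
Variables (G : mgraph) (Z : {set vert G}).
Hypothesis iZ : iso (contract Z) K4.

Lemma TK1 : #|~: Z| = 3.
Proof. by case: (iso_K4_props iZ) => _ _ _; rewrite card_contract => -[]. Qed.

Lemma TK2 u v : u \notin Z -> v \notin Z -> u != v -> exists e, same_ends (src e) (tgt e) u v.
Proof.
move=> uZ vZ uv; case: (iso_K4_props iZ) => _ _ cB _.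
have : cend Z u != cend Z v by rewrite cend_out.
case/cB => e Se; exists (val e); by rewrite -(cend_same _ _ uZ vZ).
Qed.

Lemma TK3 u : u \notin Z -> exists e w, w \in Z /\ same_ends (src e) (tgt e) u w.
Proof.
move=> uZ; case: (iso_K4_props iZ) => _ _ cB _.
have : cend Z u != None by rewrite cend_None.
case/cB => e; rewrite contract_src contract_tgt.
case/same_endsP=> [[E1 E2]|[E1 E2]]; exists (val e).
  exists (tgt (val e)); rewrite -cend_None E2 eqxx; split=> //.
  by move/eqP: E1; rewrite cend_out // => /eqP->; apply: same_ends_refl.
exists (src (val e)); rewrite -cend_None E1 eqxx; split=> //.
by move/eqP: E2; rewrite cend_out // => /eqP->; apply/same_endsP; right.
Qed.

Lemma TK4 (e1 e2 : edge G) (H1 : ~~ ((src e1 \in Z) && (tgt e1 \in Z)))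
  (H2 : ~~ ((src e2 \in Z) && (tgt e2 \in Z))) :
  same_ends (cend Z (src e1)) (cend Z (tgt e1)) (cend Z (src e2)) (cend Z (tgt e2)) -> e1 = e2.
Proof.
case: (iso_K4_props iZ) => _ sB _ _ S.
have := sB (exist _ e1 H1 : edge (contract Z)) (exist _ e2 H2 : edge (contract Z)) S.
by case.
Qed.
End TK4.

Lemma split_from_K4s G (X : {set vert G}) : loopless G ->
  iso (contract (~: X)) K4 -> has_K4_decomposition (contract X) -> has_K4_decomposition G.
Proof.
move=> lG iB dA.
have cX : #|X| = 3 by rewrite -(TK1 iB) setCK.
have cX' : 3 <= #|~: X| by have := decomp_card dA; rewrite card_contract.
have nX : nontrivial_3cut X.
  split; [by rewrite cX | exact: ltnW |].
  case: (iso_K4_props iB) => lB sB cB vB.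
  have q := @quot_contract G (~: X) lG (ex_in (ltnW cX')).
  rewrite -cutC.
  have -> : ~: X = cend (~: X) @^-1: [set None].
    by apply/setP=> v; rewrite !inE cend_None !inE.
  rewrite -(cut_quot _ q) -deg_cut // degree_complete //; by rewrite vB.
apply: K4dec_split nX dA _; exact: decomp_K4.
Qed.

Definition sig6 (i : 'I_6) : nat := (i + 3) %% 6.
Definition R6 (i j : 'I_6) : bool := (i != j) && (odd i == odd j) || (j == sig6 i :> nat).
Lemma sig6_lt (i : 'I_6) : sig6 i < 6. Proof. exact: ltn_pmod. Qed.
Definition sigo (i : 'I_6) : 'I_6 := Ordinal (sig6_lt i).

Lemma C6bar_adj (i j : 'I_6) : adj (G := C6bar) i j = R6 i j.
Proof.
rewrite sg_adj /R6 /sig6.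
by case: i => [[|[|[|[|[|[|i]]]]]] Hi]; case: j => [[|[|[|[|[|[|j]]]]]] Hj].
Qed.

Lemma odd_sig6 (i : 'I_6) : odd (sig6 i) = ~~ odd i.
Proof. by rewrite /sig6; case: i => [[|[|[|[|[|[|i]]]]]] Hi]. Qed.

Lemma R6_same (i j : 'I_6) : odd i = odd j -> R6 i j = (i != j).
Proof.
move=> E; rewrite /R6 E eqxx andbT.
have -> : (j == sig6 i :> nat) = false; last by rewrite orbF.
by apply/negbTE/negP => /eqP Ej; move: (odd_sig6 i); rewrite -Ej -E; case: (odd i).
Qed.

Lemma R6_diff (i j : 'I_6) : odd i != odd j -> R6 i j = (j == sigo i).
Proof.
by move=> /negbTE E; rewrite /R6 E andbF.
Qed.

Definition PRISM G := [/\ loopless G, simple G &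
  exists (io : 'I_6 -> vert G) ko, [/\ cancel io ko, cancel ko io &
     forall i j, adj (io i) (io j) = R6 i j]].

Lemma PRISM_C6bar : PRISM C6bar.
Proof.
split; [exact: sg_loopless | exact: sg_simple |].
by exists id, id; split => // i j; rewrite C6bar_adj.
Qed.

Lemma prism_iso G H : PRISM G -> PRISM H -> iso G H.
Proof.
case=> _ sG [io [ko [ik ki A]]] [_ sH [io' [ko' [ik' ki' A']]]].
apply: (@iso_simple G H (io' \o ko)) => //.
  by exists (io \o ko') => v /=; rewrite ?ik' ?ki ?ik ?ki'.
by move=> u v /=; rewrite A' -A !ki.
Qed.

Lemma card3 (T : finType) (A : {set T}) x y z : x \in A -> y \in A -> z \in A ->
  x != y -> x != z -> y != z -> 3 <= #|A|.
Proof.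
move=> xA yA zA xy xz yz.
have U : uniq [:: x; y; z] by rewrite /= !inE negb_or xy xz yz.
have S : {subset [:: x; y; z] <= enum A}.
  by move=> w; rewrite mem_enum !inE => /orP[/eqP->|/orP[/eqP->|/eqP->]].
by have := uniq_leq_size U S; rewrite -cardE.
Qed.

Section PrismDecomp.
Variables (G : mgraph) (io : 'I_6 -> vert G) (ko : vert G -> 'I_6).
Hypotheses (lG : loopless G) (sG : simple G) (ik : cancel io ko) (ki : cancel ko io)
  (A : forall i j, adj (io i) (io j) = R6 i j).

Lemma adjK u v : adj u v = R6 (ko u) (ko v).
Proof. by rewrite -A !ki. Qed.

Definition PS q := [set v | odd (ko v) == q].

Lemma cardPS q : #|PS q| = 3.
Proof.
have ge q' : 3 <= #|PS q'|.
  have iI := can_inj ik.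
  case: q'.
    by apply: (@card3 _ _ (io (inord 1)) (io (inord 3)) (io (inord 5)));
      rewrite ?inE ?ik ?inordK ?(inj_eq iI) // -val_eqE /= !inordK.
  by apply: (@card3 _ _ (io (inord 0)) (io (inord 2)) (io (inord 4)));
    rewrite ?inE ?ik ?inordK ?(inj_eq iI) // -val_eqE /= !inordK.
have tot : #|PS q| + #|PS (~~ q)| = 6.
  have -> : PS (~~ q) = ~: PS q by apply/setP=> v; rewrite !inE; case: q; case: (odd _).
  rewrite cardsC; rewrite -(card_ord 6); apply/esym/bij_eq_card.
  by exists ko.
move: (ge q) (ge (~~ q)) tot => h1 h2 h3; apply/eqP; rewrite eqn_leq h1 andbT.
by rewrite -(leq_add2r #|PS (~~ q)|) h3 -[6]/(3 + 3) leq_add2l.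
Qed.
Lemma PSC q : ~: PS q = PS (~~ q).
Proof. by apply/setP=> v; rewrite !inE; case: q; case: (odd _). Qed.

Lemma notPS q v : (v \notin PS q) = (odd (ko v) == ~~ q).
Proof. by rewrite !inE; case: q; case: (odd _). Qed.

Lemma partner u : adj u (io (sigo (ko u))).
Proof. by rewrite adjK ik /R6 eqxx orbT. Qed.

Lemma odd_sigo i : odd (sigo i) = ~~ odd i.
Proof. exact: odd_sig6. Qed.

Lemma cross_uniq u w1 w2 : adj u w1 -> adj u w2 ->
  odd (ko w1) != odd (ko u) -> odd (ko w2) != odd (ko u) -> w1 = w2.
Proof.
rewrite !adjK => a1 a2 d1 d2.
rewrite R6_diff in a1; last by rewrite eq_sym.
rewrite R6_diff in a2; last by rewrite eq_sym.
by apply: (can_inj ki); rewrite (eqP a1) (eqP a2).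
Qed.

Lemma prism_contract q : iso (contract (PS q)) K4.
Proof.
apply: K4_of.
- exact: loopless_contract.
- move=> e1 e2; rewrite !contract_src !contract_tgt => S.
  apply: val_inj; apply: sG.
  have helper (f1 f2 : edge (contract (PS q))) x y : x \in PS q -> y \notin PS q ->
      same_ends (src (val f1)) (tgt (val f1)) y x ->
      same_ends (cend (PS q) (src (val f1))) (cend (PS q) (tgt (val f1)))
                (cend (PS q) (src (val f2))) (cend (PS q) (tgt (val f2))) ->
      same_ends (src (val f1)) (tgt (val f1)) (src (val f2)) (tgt (val f2)).
    move=> xP yP S1 S2.
    have S3 := same_ends_map (cend (PS q)) S1.
    have : exists2 w, w \in PS q & same_ends (src (val f2)) (tgt (val f2)) y w.
      rewrite same_endsC in S2; have := same_ends_trans S2 S3.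
      case/same_endsP=> [[E1 E2]|[E1 E2]].
        exists (tgt (val f2)); first by rewrite -cend_None E2 cend_None.
        by move/eqP: E1; rewrite cend_out // => /eqP->; apply: same_ends_refl.
      exists (src (val f2)); first by rewrite -cend_None E1 cend_None.
      by move/eqP: E2; rewrite cend_out // => /eqP->; apply/same_endsP; right.
    case=> w wP Sw.
    have ax : adj y x by apply/adjP; exists (val f1).
    have aw : adj y w by apply/adjP; exists (val f2).
    have ox : odd (ko x) = q by move: xP; rewrite inE => /eqP.
    have ow : odd (ko w) = q by move: wP; rewrite inE => /eqP.
    have oy : odd (ko y) = ~~ q by move: yP; rewrite notPS => /eqP.
    have xw : x = w.
      by apply: (cross_uniq ax aw); rewrite ?ox ?ow oy; case: (q).
    rewrite -xw same_endsC in Sw.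
    exact: same_ends_trans S1 Sw.
  have H1 := contract_edgeP e1.
  case: (boolP (src (val e1) \in PS q)) => s1P.
    have t1P : tgt (val e1) \notin PS q by move: H1; rewrite s1P.
    by apply: helper s1P t1P _ S; apply/same_endsP; right.
  case: (boolP (tgt (val e1) \in PS q)) => t1P.
    exact: helper t1P s1P (same_ends_refl _ _) S.
  case/same_endsP: S => [[E1 E2]|[E1 E2]].
    move/eqP: E1; rewrite eq_sym cend_out // => /eqP<-.
    move/eqP: E2; rewrite eq_sym cend_out // => /eqP<-; exact: same_ends_refl.
  move/eqP: E1; rewrite eq_sym cend_out // => /eqP<-.
  by move/eqP: E2; rewrite eq_sym cend_out // => /eqP<-; apply/same_endsP; right.
- have kS (s : {v : vert G | v \notin PS q}) :
    exists e : edge (contract (PS q)), same_ends (src e) (tgt e) (Some s) None.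
    set u := val s; have uP : u \notin PS q := valP s.
    set w := io (sigo (ko u)).
    have wP : w \in PS q.
      by move: uP; rewrite notPS !inE ik odd_sigo => /eqP->; rewrite negbK.
    case/adjP: (partner u) => e Se.
    have He : ~~ ((src e \in PS q) && (tgt e \in PS q)).
      by case/same_endsP: Se => [[->_]|[_->]]; rewrite (negbTE uP) ?andbF.
    exists (exist _ e He).
    change (same_ends (cend (PS q) (src e)) (cend (PS q) (tgt e)) (Some s) None).
    have := same_ends_map (cend (PS q)) Se; rewrite cendK.
    by have -> : cend (PS q) w = None by apply/eqP; rewrite cend_None.
  case=> [s1|] [s2|] //= ne.
  + set u1 := val s1; set u2 := val s2.
    have u1P : u1 \notin PS q := valP s1.
    have u2P : u2 \notin PS q := valP s2.
    have : adj u1 u2.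
      rewrite adjK R6_same; last by move: u1P u2P; rewrite !notPS => /eqP-> /eqP->.
      rewrite (inj_eq (can_inj ki)); apply: contraNneq ne => E.
      by apply/eqP; congr Some; apply: val_inj; exact: E.
    case/adjP=> e Se.
    have He : ~~ ((src e \in PS q) && (tgt e \in PS q)).
      by case/same_endsP: Se => [[->_]|[_->]]; rewrite (negbTE u1P) ?(negbTE u2P) ?andbF.
    exists (exist _ e He).
    change (same_ends (cend (PS q) (src e)) (cend (PS q) (tgt e)) (Some s1) (Some s2)).
    by rewrite -(cendK s1) -(cendK s2) cend_same.
  + first [by case: (kS s1) => e Se; exists e
           | by case: (kS s2) => e Se; exists e; rewrite same_endsC same_ends_sw same_endsC].
- by rewrite card_contract PSC cardPS.
Qed.

Lemma prism_decomp : has_K4_decomposition G.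
Proof.
apply: (@split_from_K4s G (PS false)) => //.
  by rewrite PSC; exact: prism_contract.
exact/decomp_K4/prism_contract.
Qed.
End PrismDecomp.

Lemma PRISM_decomp G : PRISM G -> has_K4_decomposition G.
Proof. by case=> lG sG [io [ko [ik ki A]]]; exact: (prism_decomp lG sG ik ki A). Qed.

Lemma both_same (T : finType) (Z : {set T}) a b c d : same_ends a b c d ->
  (a \in Z) && (b \in Z) = (c \in Z) && (d \in Z).
Proof. by case/same_endsP=> [[->->]|[->->]] //; rewrite andbC. Qed.

Lemma notboth G (Z : {set vert G}) (e : edge G) u w :
  same_ends (src e) (tgt e) u w -> u \notin Z -> ~~ ((src e \in Z) && (tgt e \in Z)).
Proof. by move=> /(both_same Z) -> /negbTE ->. Qed.

Lemma crossU G (Z : {set vert G}) : iso (contract Z) K4 ->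
  forall u w1 w2, u \notin Z -> w1 \in Z -> w2 \in Z -> adj u w1 -> adj u w2 -> w1 = w2.
Proof.
move=> iZ u w1 w2 uZ w1Z w2Z /adjP[e1 S1] /adjP[e2 S2].
have ee : e1 = e2.
  apply: (TK4 iZ (notboth S1 uZ) (notboth S2 uZ)).
  have T1 := same_ends_map (cend Z) S1; have T2 := same_ends_map (cend Z) S2.
  have N1 : cend Z w1 = None by apply/eqP; rewrite cend_None.
  have N2 : cend Z w2 = None by apply/eqP; rewrite cend_None.
  rewrite N1 in T1; rewrite N2 same_endsC in T2; exact: same_ends_trans T1 T2.
subst e2; rewrite same_endsC in S1; have := same_ends_trans S1 S2.
case/same_endsP=> [[_ //]|[E _]]; by move: uZ; rewrite E w2Z.
Qed.

Lemma card3_all (T : finType) (A : {set T}) x y z : #|A| = 3 ->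
  x \in A -> y \in A -> z \in A -> x != y -> x != z -> y != z ->
  forall v, v \in A -> [|| v == x, v == y | v == z].
Proof.
move=> cA xA yA zA xy xz yz.
have sub : [set x; y; z] \subset A by apply/subsetP=> w; rewrite !inE => /orP[/orP[/eqP->|/eqP->]|/eqP->].
have c3 : 3 <= #|[set x; y; z]| by apply: (@card3 _ _ x y z); rewrite ?inE ?eqxx ?orbT.
have : [set x; y; z] == A by rewrite eqEcard sub cA.
by move/eqP <- => v; rewrite !inE -orbA.
Qed.

Lemma card3_ex (T : finType) (A : {set T}) : #|A| = 3 ->
  exists x y z, [/\ x \in A, y \in A & z \in A] /\ [/\ x != y, x != z & y != z].
Proof.
move=> cA; have : 0 < #|A| by rewrite cA.
case/card_gt0P=> x xA.
have : 1 < #|A :\ x| by have := cardsD1 x A; rewrite cA xA /= add1n => -[<-].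
case/card_gt1P=> y [z [yA zA yz]]; move: yA zA; rewrite !inE => /andP[yx yA] /andP[zx zA].
by exists x, y, z; split; split; rewrite // eq_sym.
Qed.

Section Base.
Variables (G : mgraph) (X : {set vert G}).
Hypotheses (lG : loopless G) (iB : iso (contract (~: X)) K4) (iA : iso (contract X) K4).

Lemma cardX : #|X| = 3.
Proof. by rewrite -(TK1 iB) setCK. Qed.

Lemma partnerX u : u \in X -> exists2 w, w \notin X & adj u w.
Proof.
move=> uX; have : u \notin ~: X by rewrite inE uX.
case/(TK3 iB)=> e [w [wX S]]; exists w; first by move: wX; rewrite inE.
by apply/adjP; exists e.
Qed.

Lemma base_prism : PRISM G.
Proof.
have simpleG : simple G.
  move=> e1 e2 S.
  case: (boolP ((src e1 \in X) && (tgt e1 \in X))) => H.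
    have H1 : ~~ ((src e1 \in ~: X) && (tgt e1 \in ~: X)).
      by case/andP: H => h _; rewrite inE h.
    have H2 : ~~ ((src e2 \in ~: X) && (tgt e2 \in ~: X)) by rewrite -(both_same _ S).
    exact: (TK4 iB H1 H2 (same_ends_map _ S)).
  have H2 : ~~ ((src e2 \in X) && (tgt e2 \in X)) by rewrite -(both_same _ S).
  exact: (TK4 iA H H2 (same_ends_map _ S)).
case: (card3_ex cardX) => a [b [c [[aX bX cX] [ab ac bc]]]].
case: (partnerX aX) => a' a'X aa'.
case: (partnerX bX) => b' b'X bb'.
case: (partnerX cX) => c' c'X cc'.
have cr u w1 w2 : u \notin X -> w1 \in X -> w2 \in X -> adj w1 u -> adj w2 u -> w1 = w2.
  by move=> uX w1X w2X; rewrite !(adjC _ u); apply: crossU iA u w1 w2 uX w1X w2X.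
have a'b' : a' != b' by apply: contraNneq ab => E; apply/eqP; apply: (cr a') => //; rewrite E.
have a'c' : a' != c' by apply: contraNneq ac => E; apply/eqP; apply: (cr a') => //; rewrite E.
have b'c' : b' != c' by apply: contraNneq bc => E; apply/eqP; apply: (cr b') => //; rewrite E.
have neX u v : u \in X -> v \notin X -> u != v by move=> uX vX; apply: contraNneq vX => <-.
pose L := [:: a; c'; b; a'; c; b'].
have Lu : uniq L.
  rewrite /L /= !inE !negb_or -!andbA.
  by repeat (apply/andP; split) => //; first [by apply: neX | by rewrite eq_sym; apply: neX | by rewrite eq_sym].
pose io (i : 'I_6) := nth a L i.
have ioi : injective io.
  move=> i j /eqP; rewrite /io nth_uniq ?size_tuple // => /eqP; exact: val_inj.
have allL v : v \in L.
  case: (boolP (v \in X)) => vX.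
    by move: (card3_all cardX aX bX cX ab ac bc vX); rewrite !inE => /or3P[]/eqP->; rewrite ?eqxx ?orbT.
  have a'Z : a' \in ~: X by rewrite inE.
  have b'Z : b' \in ~: X by rewrite inE.
  have c'Z : c' \in ~: X by rewrite inE.
  have vZ : v \in ~: X by rewrite inE.
  by move: (card3_all (TK1 iA) a'Z b'Z c'Z a'b' a'c' b'c' vZ); rewrite !inE => /or3P[]/eqP->; rewrite ?eqxx ?orbT.
have ios v : exists i, io i = v.
  have h : index v L < 6 by rewrite -[6]/(size L) index_mem.
  by exists (Ordinal h); rewrite /io nth_index.
case: (inj_surj_bij ioi ios) => ko ik ki.
have sideX i : (io i \in X) = ~~ odd i.
  by rewrite /io; case: i => [[|[|[|[|[|[|i]]]]]] Hi] //=;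
    rewrite ?aX ?bX ?cX ?(negbTE a'X) ?(negbTE b'X) ?(negbTE c'X).
have part i : adj (io i) (io (sigo i)).
  have E : io (sigo i) = nth a [:: a'; c; b'; a; c'; b] i.
    by rewrite /io /L; case: i => [[|[|[|[|[|[|i]]]]]] Hi].
  rewrite E /io /L; clear E; case: i => [[|[|[|[|[|[|i]]]]]] Hi] //=; by rewrite ?aa' ?bb' ?cc' // adjC.
split => //; exists io, ko; split => // i j.
case: (boolP (odd i == odd j)) => oij.
  rewrite R6_same; last exact/eqP.
  case: (eqVneq i j) => [->|nij]; first exact: adj_loop.
  have nio : io i != io j by rewrite (inj_eq ioi).
  apply/adjP; case: (boolP (odd i)) => oi.
    have h1 : io i \notin X by rewrite sideX oi.
    have h2 : io j \notin X by rewrite sideX -(eqP oij) oi.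
    exact: (TK2 iA h1 h2 nio).
  have h1 : io i \notin ~: X by rewrite inE sideX oi.
  have h2 : io j \notin ~: X by rewrite inE sideX -(eqP oij) (negbTE oi).
  exact: (TK2 iB h1 h2 nio).
rewrite R6_diff //; apply/idP/eqP => [aij|->]; last exact: part.
apply: ioi.
have oj : odd j = ~~ odd i by move: oij; case: (odd i); case: (odd j).
have os : odd (sigo i) = ~~ odd i by apply: odd_sigo.
case: (boolP (odd i)) => oi.
  apply: (crossU iA (u := io i)); rewrite ?sideX ?oj ?os ?oi //; exact: part.
apply: (crossU iB (u := io i)); rewrite ?inE ?sideX ?oj ?os ?(negbTE oi) //; exact: part.
Qed.
End Base.

Lemma base_iso G (X : {set vert G}) : loopless G -> iso (contract (~: X)) K4 -> iso (contract X) K4 -> iso G C6bar.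
Proof. move=> lG iB iA; exact: prism_iso (base_prism lG iB iA) PRISM_C6bar. Qed.

Definition good G (X : {set vert G}) :=
  iso (contract (~: X)) K4 /\ has_K4_decomposition (contract X).

Definition tri G (x y z : vert G) := [&& x != y, x != z, y != z, adj x y, adj x z & adj y z].

Definition twotri G := exists (x1 y1 z1 x2 y2 z2 : vert G),
  [/\ tri x1 y1 z1, tri x2 y2 z2 &
      forall v, v \in [:: x1; y1; z1] -> v \in [:: x2; y2; z2] -> False].

Lemma ex2_card (T : finType) (A : {set T}) : 1 < #|A| ->
  exists x y, [/\ x \in A, y \in A & x != y].
Proof. by move/card_gt1P. Qed.

Section Lift.
Variables (G : mgraph) (S : {set vert G}) (Y : {set vert (contract (~: S))}).
Hypotheses (lG : loopless G) (cS : #|cut S| = 3) (c2 : 1 < #|~: S|)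
  (dA : has_K4_decomposition (contract S)) (gY : good Y) (nY : None \notin Y).

Let phi := cend (~: S).
Definition Y0 := [set v | phi v \in Y].

Lemma phiN v : v \notin S -> phi v = None.
Proof. by move=> vS; apply/eqP; rewrite cend_None inE. Qed.

Lemma Y0S : Y0 \subset S.
Proof.
apply/subsetP=> v; rewrite inE; case: (boolP (v \in S)) => // vS.
by rewrite phiN // (negbTE nY).
Qed.

Lemma liftK4 : iso (contract (~: Y0)) K4.
Proof.
case: gY => iY _.
have lB : loopless (contract (~: S)) := @loopless_contract G (~: S) lG.
case: (ex2_card c2) => u1 [u2 [u1S u2S _]].
apply: iso_trans iY.
apply: (@quot_isoW G (contract (~: Y0)) (contract (~: Y)) (cend (~: Y0)) (cend (~: Y) \o phi)).
- apply: quot_contract lG _; exists u1; rewrite !inE phiN ?(negbTE nY) //.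
  by move: u1S; rewrite inE.
- apply: quot_comp; first by apply: quot_contract lG _; exists u1.
  by apply: quot_contract lB _; exists None; rewrite inE.
move=> u v /=; rewrite (@cend_eq (contract (~: S)) (~: Y) (phi u) (phi v)).
rewrite [phi u == phi v]cend_eq !cend_eq !inE.
case: (boolP (u \in S)) => uS; case: (boolP (v \in S)) => vS /=.
- by rewrite orbF.
- by rewrite (phiN vS) (negbTE nY) !andbT orbF.
- by rewrite (phiN uS) (negbTE nY) /= orbF.
- by rewrite (phiN uS) (phiN vS) (negbTE nY) /= !orbT.
Qed.

Lemma Y0_ne : exists v, v \in Y0.
Proof.
case: gY => iY _; have : #|Y| = 3 by rewrite -(TK1 iY) setCK.
move=> cY; have : 0 < #|Y| by rewrite cY.
case/card_gt0P => y yY.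
have yN : y != None by apply: contraNneq nY => <-.
case: (cend_Some yN) => v [_ Ev]; exists v; rewrite inE; change (cend (~: S) v \in Y); by rewrite Ev.
Qed.

Lemma x1_ex : exists x, x \in S /\ x \notin Y0.
Proof.
case: gY => _ dY.
have : 1 < #|~: Y| by have := decomp_card dY; rewrite card_contract ltnS => h; exact: (leq_trans (isT : 2 <= 3) h).
case/ex2_card => w1 [w2 [w1Y w2Y ne]].
have [w [wY wN]] : exists w, w \in ~: Y /\ w != None.
  case: (eqVneq w1 None) => [E|]; last by exists w1.
  by exists w2; split=> //; rewrite -E eq_sym.
case: (cend_Some wN) => x [xS Ex]; exists x; split; first by move: xS; rewrite inE negbK.
rewrite inE; change (cend (~: S) x \notin Y); by rewrite Ex; move: wY; rewrite inE.
Qed.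

Definition ZS : {set vert (contract Y0)} :=
  [set w : vert (contract Y0) | if w is Some s then val s \in S else true].

Lemma ZE v : (cend Y0 v \in ZS) = (v \in S).
Proof.
rewrite inE /cend; case: insubP => [s _ Es|/negbNE vY]; first by rewrite Es.
by rewrite (subsetP Y0S).
Qed.

Lemma liftDecomp : has_K4_decomposition (contract Y0).
Proof.
case: gY => iY dY.
have lB : loopless (contract (~: S)) := @loopless_contract G (~: S) lG.
have lC : loopless (contract Y0) := @loopless_contract G Y0 lG.
have qY0 := quot_contract lG Y0_ne.
case: (ex2_card c2) => u1 [u2 [u1S u2S u12]].
move: u1S u2S; rewrite !inE => u1S u2S.
have u1Y : u1 \notin Y0 by apply: contra u1S; apply: (subsetP Y0S).
case: x1_ex => x1 [x1S x1Y].
have S0 : exists x, x \in S by exists x1.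
have nZ : nontrivial_3cut ZS.
  split.
  - apply/card_gt1P; exists None, (cend Y0 x1); split; rewrite ?ZE ?inE //.
    by rewrite eq_sym cend_None.
  - apply/card_gt1P; exists (cend Y0 u1), (cend Y0 u2); rewrite !in_setC !ZE u1S u2S.
    by split=> //; rewrite cend_eq negb_or u12 /= (negbTE u1Y).
  - rewrite (cut_quot ZS qY0).
    by have -> : cend Y0 @^-1: ZS = S by apply/setP=> v; rewrite inE ZE.
apply: (K4dec_split nZ).
  apply: (decomp_iso dA); first exact: loopless_contract.
  apply: (@quot_isoW G (contract ZS) (contract S) (cend ZS \o cend Y0) (cend S)).
  - by apply: quot_comp qY0 (quot_contract lC _); exists None; rewrite inE.
  - exact: quot_contract lG S0.
  move=> u v /=; rewrite (@cend_eq (contract Y0) ZS) !ZE !cend_eq.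
  case: (boolP (u \in Y0)) => uY; case: (boolP (v \in Y0)) => vY /=;
    rewrite ?orbF //; by rewrite !(subsetP Y0S _ uY) ?(subsetP Y0S _ vY) ?orbT.
apply: (decomp_iso dY); first exact: loopless_contract.
apply: (@quot_isoW G (contract (~: ZS)) (contract Y) (cend (~: ZS) \o cend Y0) (cend Y \o phi)).
- apply: quot_comp qY0 (quot_contract lC _); exists (cend Y0 u1).
  by rewrite in_setC ZE.
- apply: quot_comp; first by apply: quot_contract lG _; exists u1; rewrite inE.
  case: Y0_ne => v0; rewrite inE => h; apply: quot_contract lB _; by exists (phi v0).
move=> u v /=; rewrite (@cend_eq (contract Y0) (~: ZS)) (@cend_eq (contract (~: S)) Y) !in_setC !ZE.
rewrite !cend_eq !inE -!orbA; congr (_ || _).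
by rewrite orbC.
Qed.
Lemma lift_good : exists2 Y1 : {set vert G}, good Y1 & Y1 \subset S.
Proof. by exists Y0; [split; [exact: liftK4 | exact: liftDecomp] | exact: Y0S]. Qed.
End Lift.

Lemma adj_down G (Z : {set vert G}) u v : u \notin Z -> v \notin Z ->
  adj (G := contract Z) (cend Z u) (cend Z v) -> adj u v.
Proof.
move=> uZ vZ /adjP[e Se]; apply/adjP; exists (val e).
by rewrite -(cend_same _ _ uZ vZ).
Qed.

Definition STRUCT G := iso G K4 \/
  ((forall w : vert G, exists2 X, good X & w \notin X) /\ twotri G).

Lemma side G (S : {set vert G}) : loopless G -> #|cut S| = 3 -> 1 < #|S| -> 1 < #|~: S| ->
  has_K4_decomposition (contract S) -> has_K4_decomposition (contract (~: S)) ->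
  STRUCT (contract (~: S)) ->
  (exists2 Y, good Y & Y \subset S) /\
  exists x y z, tri x y z /\ [/\ x \in S, y \in S & z \in S].
Proof.
move=> lG cS c1 c2 dA dB [iB|[gB tB]].
  split; first by exists S.
  have cS3 : #|S| = 3 by rewrite -(TK1 iB) setCK.
  case: (card3_ex cS3) => x [y [z [[xS yS zS] [xy xz yz]]]].
  have nS v : v \in S -> v \notin ~: S by rewrite inE negbK.
  have ad u v : u \in S -> v \in S -> u != v -> adj u v.
    by move=> uS vS uv; apply/adjP; apply: (TK2 iB) => //; apply: nS.
  by exists x, y, z; split=> //; rewrite /tri xy xz yz !ad.
split.
  case: (gB None) => Y gY nY; exact: lift_good lG cS c2 dA gY nY.
case: tB => x1 [y1 [z1 [x2 [y2 [z2 [t1 t2 dj]]]]]].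
have [x [y [z [t nN]]]] : exists x y z : vert (contract (~: S)), tri x y z /\ None \notin [:: x; y; z].
  case: (boolP (None \in [:: x1; y1; z1])) => h1; last by exists x1, y1, z1.
  case: (boolP (None \in [:: x2; y2; z2])) => h2; last by exists x2, y2, z2.
  by case: (dj _ h1 h2).
move: nN; rewrite !inE !negb_or => /and3P[xN yN zN].
rewrite !(eq_sym None) in xN yN zN.
case: (cend_Some xN) => x' [x'S Ex]; case: (cend_Some yN) => y' [y'S Ey];
  case: (cend_Some zN) => z' [z'S Ez]; subst x y z.
move: t; rewrite /tri => /and3P[nxy nxz /and4P[nyz axy axz ayz]].
exists x', y', z'; split; last by split; move: x'S y'S z'S; rewrite !inE !negbK.
rewrite /tri !(adj_down x'S y'S) ?(adj_down x'S z'S) ?(adj_down y'S z'S) //.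
have n1 : x' != y' by apply: contraNneq nxy => ->.
have n2 : x' != z' by apply: contraNneq nxz => ->.
have n3 : y' != z' by apply: contraNneq nyz => ->.
by rewrite n1 n2 n3.
Qed.

Lemma in3 (T : eqType) (P : pred T) x y z v : P x -> P y -> P z -> v \in [:: x; y; z] -> P v.
Proof. by move=> px py pz; rewrite !inE => /or3P[]/eqP->. Qed.

Lemma struct G : has_K4_decomposition G -> loopless G -> STRUCT G.
Proof.
elim=> {G} [G nG iG | G X [c1 c2 c3] dA IHA dB IHB] lG; first by left.
have lA := @loopless_contract G X lG.
have lB := @loopless_contract G (~: X) lG.
have sX := side lG c3 c1 c2 dA dB (IHB lB).
have sX' : (exists2 Y, good Y & Y \subset ~: X) /\
    exists x y z, tri x y z /\ [/\ x \in ~: X, y \in ~: X & z \in ~: X].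
  apply: side => //; rewrite ?cutC ?setCK //.
  exact: IHA.
right; split.
  move=> w; case: (boolP (w \in X)) => wX.
    case: sX' => [[Y gY sub] _]; exists Y => //.
    by apply/negP => /(subsetP sub); rewrite inE wX.
  case: sX => [[Y gY sub] _]; exists Y => //.
  by apply/negP => /(subsetP sub); rewrite (negbTE wX).
case: sX => [_ [x1 [y1 [z1 [t1 [h1 h2 h3]]]]]].
case: sX' => [_ [x2 [y2 [z2 [t2 [k1 k2 k3]]]]]].
exists x1, y1, z1, x2, y2, z2; split=> // v.
move=> /(in3 (P := mem X) h1 h2 h3) vX /(in3 (P := mem (~: X)) k1 k2 k3).
have vX' : v \in X := vX; move=> H; have : v \in ~: X := H.
by rewrite inE vX'.
Qed.

Lemma loopless_split G (X : {set vert G}) :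
  loopless (contract X) -> loopless (contract (~: X)) -> loopless G.
Proof.
move=> lA lB e; apply/negP => /eqP E.
case: (boolP (src e \in X)) => sX.
  have H : ~~ ((src e \in ~: X) && (tgt e \in ~: X)) by rewrite inE sX.
  by move: (lB (exist _ e H)); rewrite contract_src contract_tgt /= E eqxx.
have H : ~~ ((src e \in X) && (tgt e \in X)) by rewrite (negbTE sX).
by move: (lA (exist _ e H)); rewrite contract_src contract_tgt /= E eqxx.
Qed.

Lemma converse G : tri_ladder G -> loopless G /\ has_K4_decomposition G.
Proof.
elim=> {G} [G iG|G H v k _ [lH dH] _ [X [iA iB]]].
  have lG := loopless_iso iG (@sg_loopless 6 _).
  by split=> //; exact: (decomp_iso (PRISM_decomp PRISM_C6bar) lG iG).
have iA' := iso_atW iA; have iB' := iso_atW iB.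
have lA := loopless_iso iA' lH.
have lB := loopless_iso iB' (@sg_loopless 4 _).
have lG := loopless_split lA lB.
split=> //; apply: split_from_K4s lG iB' _.
exact: (decomp_iso dH lA iA').
Qed.

Lemma tri_in G (x y z v : vert G) : tri x y z -> v \in [:: x; y; z] -> in_triangle v.
Proof.
rewrite /tri => /and3P[xy xz /and4P[yz axy axz ayz]].
rewrite !inE => /or3P[]/eqP->.
- by exists y, z; rewrite eq_sym xy eq_sym xz yz axy axz ayz.
- by exists x, z; rewrite xy eq_sym yz xz adjC axy ayz axz.
- by exists x, y; rewrite xz yz xy adjC axz adjC ayz axy.
Qed.

Definition BIP G := exists F : {set edge G}, #|F| <= 2 /\ bipartite_in (~: F).

Lemma tri_edge G (x y z : vert G) (F : {set edge G}) : tri x y z -> bipartite_in (~: F) ->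
  exists2 e, e \in F & (src e \in [:: x; y; z]) && (tgt e \in [:: x; y; z]).
Proof.
rewrite /tri => /and3P[_ _ /and4P[_ /adjP[e1 S1] /adjP[e2 S2] /adjP[e3 S3]]] [col Hc].
have key e u v : same_ends (src e) (tgt e) u v -> e \notin F -> col u != col v.
  move=> S eF; have := Hc e; rewrite inE eF => /(_ isT).
  by case/same_endsP: S => [[->->]|[->->]] //; rewrite eq_sym.
have ends e u v : same_ends (src e) (tgt e) u v -> u \in [:: x; y; z] -> v \in [:: x; y; z] ->
    (src e \in [:: x; y; z]) && (tgt e \in [:: x; y; z]).
  by move=> S hu hv; case/same_endsP: S => [[->->]|[->->]]; rewrite hu hv.
have mx : x \in [:: x; y; z] by rewrite !inE eqxx.
have my : y \in [:: x; y; z] by rewrite !inE eqxx ?orbT.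
have mz : z \in [:: x; y; z] by rewrite !inE eqxx ?orbT.
case: (boolP (e1 \in F)) => h1; first by exists e1 => //; exact: ends S1 mx my.
case: (boolP (e2 \in F)) => h2; first by exists e2 => //; exact: ends S2 mx mz.
case: (boolP (e3 \in F)) => h3; first by exists e3 => //; exact: ends S3 my mz.
move: (key _ _ _ S1 h1) (key _ _ _ S2 h2) (key _ _ _ S3 h3).
by case: (col x); case: (col y); case: (col z).
Qed.

Lemma main_fwd n : forall G, #|vert G| <= n -> loopless G -> has_K4_decomposition G ->
  BIP G -> iso G K4 \/ tri_ladder G.
Proof.
elim: n => [|n IH] G cG lG dG bG.
  by move: (leq_trans (decomp_card dG) cG).
case: (struct dG lG) => [iK|[gd tw]]; first by left.
right.
case: (tw) => x1 [_ [_ [_ [_ [_ _]]]]].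
case: (gd x1) => X [iB dA] _.
case: bG => F [cF [col Hc]].
have lA := @loopless_contract G X lG.
have cX : #|X| = 3 by rewrite -(TK1 iB) setCK.
have nS v : v \in X -> v \notin ~: X by rewrite inE negbK.
have adjX u v : u \in X -> v \in X -> u != v -> exists e, same_ends (src e) (tgt e) u v.
  by move=> uX vX uv; apply: (TK2 iB) => //; apply: nS.
case: (card3_ex cX) => a [b [c [[aX bX cX'] [ab ac bc]]]].
have all3 := card3_all cX aX bX cX' ab ac bc.
have [p [q [r [[pX qX rX] [[pq pr qr] [allX cpq]]]]]] :
  exists p q r, [/\ p \in X, q \in X & r \in X] /\ [/\ p != q, p != r & q != r] /\
    ((forall v, v \in X -> [|| v == p, v == q | v == r]) /\ col p = col q).
  case: (eqVneq (col a) (col b)) => [E|nab].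
    by exists a, b, c; do !split.
  case: (eqVneq (col a) (col c)) => [E|nac].
    exists a, c, b; do !split => //; first by rewrite eq_sym.
    by move=> v /all3 /or3P[] ->; rewrite ?orbT.
  exists b, c, a; do !split => //; try by rewrite eq_sym.
    by move=> v /all3 /or3P[] ->; rewrite ?orbT.
  by move: nab nac; case: (col a); case: (col b); case: (col c).
have colX v : v \in X -> v != r -> col v = col p.
  move=> vX vr; case/or3P: (allX v vX) => /eqP E; first by rewrite E.
    by rewrite E cpq.
  by rewrite E eqxx in vr.
case: (adjX p q pX qX pq) => epq Spq.
have epqF : epq \in F.
  apply/negPn/negP => h; have := Hc epq; rewrite inE h => /(_ isT).
  by case/same_endsP: Spq => [[->->]|[->->]]; rewrite cpq eqxx.
have epqX : (src epq \in X) && (tgt epq \in X).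
  by case/same_endsP: Spq => [[->->]|[->->]]; rewrite pX qX.
pose F1 := [set e : edge (contract X) | val e \in F].
pose F2 := [set e : edge (contract X) | incident (val e) r].
have cF1 : #|F1| <= 1.
  have sub : val @: F1 \subset F :\ epq.
    apply/subsetP => _ /imsetP[e eF1 ->]; rewrite !inE; move: eF1; rewrite inE => ->.
    rewrite andbT; apply: contraNneq (contract_edgeP e) => ->; exact: epqX.
  have := subset_leq_card sub; rewrite card_imset; last exact: val_inj.
  move=> h; apply: leq_trans h _.
  by move: cF; have := cardsD1 epq F; rewrite epqF add1n => ->; rewrite ltnS.
have hlp (e : edge (contract X)) : incident (val e) r ->
    ~~ ((src (val e) \in ~: X) && (tgt (val e) \in ~: X)) /\
    same_ends (cend (~: X) (src (val e))) (cend (~: X) (tgt (val e))) (cend (~: X) r) None.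
  move=> ie; have S := oth_same ie.
  have oX : oth r (val e) \notin X.
    apply: contra (contract_edgeP e) => oX; by rewrite (both_same X S) rX oX.
  split; first by rewrite (both_same (~: X) S) inE rX.
  have := same_ends_map (cend (~: X)) S.
  by have -> : cend (~: X) (oth r (val e)) = None by apply/eqP; rewrite cend_None inE.
have cF2 : #|F2| <= 1.
  apply/card_le1_eqP => e1 e2; rewrite !inE => i1 i2; apply: val_inj.
  case: (hlp e1 i1) => n1 s1; case: (hlp e2 i2) => n2 s2.
  symmetry; apply: (TK4 iB n1 n2); rewrite same_endsC in s2; exact: same_ends_trans s1 s2.
pose col' (w : vert (contract X)) := if w is Some s then col (val s) else col p.
have col'E v : v \notin X -> col' (cend X v) = col v.
  move=> vX; rewrite /cend; case: insubP => [s _ <- //|].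
  by rewrite vX.
have col'N v : v \in X -> col' (cend X v) = col p.
  by move=> vX; have /eqP -> : cend X v == None by rewrite cend_None.
have bip' : bipartite_in (~: (F1 :|: F2)).
  exists col' => e; rewrite !inE negb_or => /andP[n1 n2].
  rewrite contract_src contract_tgt.
  have hc : col (src (val e)) != col (tgt (val e)).
    by have := Hc (val e); rewrite inE n1; apply.
  have hX := contract_edgeP e.
  move: n2; rewrite /incident negb_or => /andP[sr tr].
  case: (boolP (src (val e) \in X)) => sX.
    have tX : tgt (val e) \notin X by move: hX; rewrite sX.
    by rewrite col'N // col'E // -(colX _ sX sr).
  case: (boolP (tgt (val e) \in X)) => tX.
    by rewrite col'E // col'N // -(colX _ tX tr).
  by rewrite !col'E.
have bG' : BIP (contract X).
  exists (F1 :|: F2); split => //; rewrite cardsU; apply: leq_trans (leq_subr _ _) _.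
  by move: cF1 cF2; case: #|F1| => [|[|]] //; case: #|F2| => [|[|]].
have cG' : #|vert (contract X)| <= n.
  rewrite card_contract; move: cG; rewrite -(cardsC X) cX add3n ltnS => h.
  exact: leq_trans (leqnSn _) h.
have base : iso (contract X) K4 -> tri_ladder G.
  by move=> iA; apply: TL_base; exact: base_iso lG iB iA.
case: (IH _ cG' lA dA bG') => [iA|tlA]; first exact: base iA.
case: (struct dA lA) => [iA|[_ [y1 [y2 [y3 [z1 [z2 [z3 [t1 t2 dj]]]]]]]]]; first exact: base iA.
have F2N f : f \in F2 -> (src f == None) || (tgt f == None).
  rewrite inE /incident contract_src contract_tgt !cend_None => /orP[/eqP->|/eqP->];
  by rewrite rX ?orbT.
have inN : in_triangle (None : vert (contract X)).
  case: (tri_edge t1 bip') => f1 f1F /andP[s1 u1].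
  case: (tri_edge t2 bip') => f2 f2F /andP[s2 u2].
  case: (boolP (f1 \in F2)) => h1.
    by case/orP: (F2N _ h1) => /eqP E; apply: (tri_in t1); rewrite -E.
  case: (boolP (f2 \in F2)) => h2.
    by case/orP: (F2N _ h2) => /eqP E; apply: (tri_in t2); rewrite -E.
  have g1 : f1 \in F1 by move: f1F; rewrite inE (negbTE h1) orbF.
  have g2 : f2 \in F1 by move: f2F; rewrite inE (negbTE h2) orbF.
  have ff : f1 = f2 by move/card_le1_eqP: cF1 => /(_ f2 f1 g2 g1).
  by subst f2; case: (dj _ s1 s2).
case: (iB) => f [g [bf bg E]].
apply: (@TL_step G (contract X) None (f None) tlA inN).
exists X; split.
  by exists id, id; split; try exists id; move=> //= e; apply: same_ends_refl.
by exists f, g; split.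
Qed.

Lemma forward G : loopless G -> near_bipartite G -> 6 <= #|vert G| ->
  has_K4_decomposition G -> tri_ladder G.
Proof.
move=> lG [_ _ [e1 [e2 [_ [bip _]]]]] c6 dG.
have bG : BIP G by exists [set e1; e2]; split=> //; rewrite cards2; case: (e1 != e2).
case: (main_fwd (leqnn _) lG dG bG) => // iK.
by move: c6; rewrite (iso_card iK) /= card_ord.
Qed.


Unset Implicit Arguments.

Theorem mainTheorem14 (G : mgraph) :
  loopless G -> cubic G -> brick G -> near_bipartite G -> 6 <= #|vert G| ->
  (has_K4_decomposition G <-> tri_ladder G).
Proof.
move=> lG _ _ nb c6; split; first exact: forward.
by case/converse.
Qed.
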